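(* Consider the graded cluster algebra $\mathcal{A}\big((x_1,x_2,x_3),B,(1,1,2)\big)$ with $B=\begin{pmatrix}0&2&-1\\-2&0&1\\1&-1&0\end{pmatrix}$. It has infinitely many distinct cluster variables of degree $1$ and infinitely many distinct cluster variables of degree $-1$.
   Context: Graded cluster algebras: for a $3\times3$ skew-symmetric integer matrix $B=(b_{ij})$ and $k\in\{1,2,3\}$, $\mu_k(B)=(b'_{ij})$ with $b'_{ij}=-b_{ij}$ if $i=k$ or $j=k$ and $b'_{ij}=b_{ij}+\operatorname{sgn}(b_{ik})\max(b_{ik}b_{kj},0)$ otherwise. A seed $((x_1,x_2,x_3),B)$ mutates in direction $k$ to $(x',\mu_k B)$ with $x'_j=x_j$ ($j\ne k$) and $x'_k=\big(\prod_{b_{ik}>0}x_i^{b_{ik}}+\prod_{b_{ik}<0}x_i^{-b_{ik}}\big)/x_k$. Cluster variables are all entries of clusters reachable by iterated mutation; $\mathcal{A}(x,B,g)$ is the algebra they generate, graded by $\deg x_i=g_i$ where $Bg=0$; under mutation at $k$ the degree vector becomes $g'$ with $g'_j=g_j$ ($j\neq k$), $g'_k=-g_k+\sum_{b_{ik}>0}b_{ik}g_i$, and every cluster variable is homogeneous. *)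

(* Defs.v *)
From HB Require Import structures.
From mathcomp Require Import all_boot all_order all_algebra.
From mathcomp Require Import fraction.
From mathcomp Require Import mpoly.
Set Implicit Arguments. Unset Strict Implicit. Unset Printing Implicit Defensive.
Import Order.TTheory GRing.Theory Num.Theory.
Local Open Scope ring_scope.

Definition Kfield := {fraction {mpoly rat[3]}}.

Definition xinit (i : 'I_3) : Kfield := tofrac ('X_i : {mpoly rat[3]}).

Definition mut_mat (k : 'I_3) (B : 'M[int]_3) : 'M[int]_3 :=
  \matrix_(i, j)
    if (i == k) || (j == k) then - B i j
    else B i j + Num.sg (B i k) * Num.max (B i k * B k j) 0.

Record gseed := GSeed {
  gs_x : 'I_3 -> Kfield;
  gs_B : 'M[int]_3;
  gs_g : 'I_3 -> int }.

Definition mut_seed (k : 'I_3) (s : gseed) : gseed :=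
  let x := gs_x s in let B := gs_B s in let g := gs_g s in
  GSeed
    (fun j => if j == k then
       ((\prod_(i < 3 | 0 < B i k) x i ^+ `|B i k|%N)
        + (\prod_(i < 3 | B i k < 0) x i ^+ `|B i k|%N)) / x k
     else x j)
    (mut_mat k B)
    (fun j => if j == k then
       - g k + \sum_(i < 3 | 0 < B i k) B i k * g i
     else g j).

Definition mut_seq (ks : seq 'I_3) (s : gseed) : gseed :=
  foldl (fun t k => mut_seed k t) s ks.

Definition cluster_var_of_degree (s : gseed) (v : Kfield) (d : int) : Prop :=
  exists (ks : seq 'I_3) (k : 'I_3),
    gs_x (mut_seq ks s) k = v /\ gs_g (mut_seq ks s) k = d.

Definition B0 : 'M[int]_3 :=
  \matrix_(i, j)
    nth (0 : int) (nth [::] [:: [:: 0; 2; -1]; [:: -2; 0; 1]; [:: 1; -1; 0]] i) j.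

Definition g0 (i : 'I_3) : int := nth (0 : int) [:: 1; 1; 2] i.

Definition seed0 : gseed := GSeed xinit B0 g0.

(* Main.v *)
Require Import Defs.
From HB Require Import structures.
From mathcomp Require Import all_boot all_order all_algebra.
From mathcomp Require Import fraction.
From mathcomp Require Import mpoly.
From mathcomp Require Import ring lra.
Set Implicit Arguments. Unset Strict Implicit. Unset Printing Implicit Defensive.
Import Order.TTheory GRing.Theory Num.Theory.
Local Open Scope ring_scope.

Definition one3 : 'I_3 -> rat := fun _ => 1.
Notation ev p := (meval one3 p).

Definition rep (v : Kfield) (r : rat) : Prop :=
  exists p q : {mpoly rat[3]}, ev q != 0 /\ v = tofrac p / tofrac q /\ r = ev p / ev q.

Lemma ev_nz (q : {mpoly rat[3]}) : ev q != 0 -> tofrac q != 0 :> Kfield.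
Proof. by move=> h; rewrite tofrac_eq0; apply: contra h => /eqP ->; rewrite meval0. Qed.

Lemma rep1 : rep 1 1.
Proof. exists 1, 1; rewrite meval1 tofrac1 !divr1 oner_eq0; split => //. Qed.

Lemma repX i : rep (xinit i) 1.
Proof. exists 'X_i, 1; rewrite meval1 tofrac1 !divr1 mevalXU oner_eq0; split => //. Qed.

Lemma repM u w a b : rep u a -> rep w b -> rep (u * w) (a * b).
Proof.
move=> [p [q [hq [-> ->]]]] [p' [q' [hq' [-> ->]]]].
exists (p * p'), (q * q'); rewrite !mevalM !tofracM mulf_neq0 //; split => //.
split; by rewrite invfM mulrACA.
Qed.

Lemma repD u w a b : rep u a -> rep w b -> rep (u + w) (a + b).
Proof.
move=> [p [q [hq [-> ->]]]] [p' [q' [hq' [-> ->]]]].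
have hF := ev_nz hq; have hF' := ev_nz hq'.
exists (p * q' + p' * q), (q * q'); rewrite !mevalD !mevalM !tofracD !tofracM mulf_neq0 //; split => //.
split; (rewrite addf_div; [done|exact: ev_nz|exact: ev_nz]) || (rewrite addf_div //).
Qed.

Lemma repV u a : rep u a -> a != 0 -> rep (u^-1) (a^-1).
Proof.
move=> [p [q [hq [-> ->]]]] ha.
have hp : ev p != 0 by apply: contra ha => /eqP ->; rewrite mul0r.
exists q, p; split; [done | split; by rewrite invf_div].
Qed.

Lemma repXn u a n : rep u a -> rep (u ^+ n) (a ^+ n).
Proof. move=> h; elim: n => [|n IH]; first by rewrite !expr0; exact: rep1.
by rewrite !exprS; apply: repM. Qed.
Lemma rep_uniq v r r' : rep v r -> rep v r' -> r = r'.
Proof.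
move=> [p [q [hq [-> ->]]]] [p' [q' [hq' [E ->]]]].
have hF := ev_nz hq; have hF' := ev_nz hq'.
have E2 : tofrac p * tofrac q' = tofrac p' * tofrac q :> Kfield.
  apply/eqP. rewrite -(eqr_div _ _ hF hF'). rewrite E. exact: eqxx.
have : tofrac (p * q') = tofrac (p' * q) :> Kfield by rewrite !tofracM.
move/eqP. rewrite tofrac_eq. move=> /eqP /(congr1 (meval one3)). rewrite !mevalM => h.
apply/eqP. rewrite eqr_div; [by rewrite h|exact: hq|exact: hq'].
Qed.

Definition i0 : 'I_3 := @Ordinal 3 0 isT.
Definition i1 : 'I_3 := @Ordinal 3 1 isT.
Definition i2 : 'I_3 := @Ordinal 3 2 isT.
Definition mxl (l : seq (seq int)) : 'M[int]_3 := \matrix_(i, j) nth 0 (nth [::] l i) j.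
Definition tr (a b c : rat) : 'I_3 -> rat := fun i => nth 0 [:: a; b; c] i.
Definition trz (a b c : int) : 'I_3 -> int := fun i => nth 0 [:: a; b; c] i.
Definition rmut k (B : 'M[int]_3) (r : 'I_3 -> rat) : 'I_3 -> rat :=
  fun j => if j == k then
       ((\prod_(i < 3 | 0 < B i k) r i ^+ `|B i k|%N)
        + (\prod_(i < 3 | B i k < 0) r i ^+ `|B i k|%N)) / r k
     else r j.
Lemma prod3 (P : pred 'I_3) (F : 'I_3 -> rat) : \prod_(i < 3 | P i) F i =
  (if P i0 then F i0 else 1) * (if P i1 then F i1 else 1) * (if P i2 then F i2 else 1).
Proof.
rewrite big_mkcond !big_ord_recl big_ord0 /= mulr1 mulrA.
by congr (_ * _ * _); congr (if P _ then F _ else _); apply: val_inj.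
Qed.
Lemma sum3 (P : pred 'I_3) (F : 'I_3 -> int) : \sum_(i < 3 | P i) F i =
  (if P i0 then F i0 else 0) + (if P i1 then F i1 else 0) + (if P i2 then F i2 else 0).
Proof.
rewrite big_mkcond !big_ord_recl big_ord0 /= addr0 addrA.
by congr (_ + _ + _); congr (if P _ then F _ else _); apply: val_inj.
Qed.

Definition relx (s : gseed) (r : 'I_3 -> rat) := forall i, rep (gs_x s i) (r i) /\ 0 < r i.

Lemma relx_ext s r r' : relx s r -> r =1 r' -> relx s r'.
Proof. by move=> h e i; rewrite -e. Qed.

Lemma relx_mut k s r : relx s r -> relx (mut_seed k s) (rmut k (gs_B s) r).
Proof.
move=> h j; rewrite /mut_seed /rmut /=; case: (j == k); last exact: h.
have hP : forall (P : pred 'I_3) (e : 'I_3 -> nat),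
  rep (\prod_(i < 3 | P i) gs_x s i ^+ e i) (\prod_(i < 3 | P i) r i ^+ e i) /\
  0 < \prod_(i < 3 | P i) r i ^+ e i.
  move=> P e; apply: (big_ind2 (fun u a => rep u a /\ 0 < a)).
  - by split; [exact: rep1 | exact: ltr01].
  - move=> u1 a1 u2 a2 [h1 p1] [h2 p2]; split; [exact: repM | exact: mulr_gt0].
  - move=> i _; have [hi pi] := h i; split; [exact: repXn | exact: exprn_gt0].
have [hk pk] := h k.
have [h1 p1] := hP (fun i => 0 < gs_B s i k) (fun i => `|gs_B s i k|%N).
have [h2 p2] := hP (fun i => gs_B s i k < 0) (fun i => `|gs_B s i k|%N).
split.
  apply: repM; first exact: repD.
  by apply: repV => //; rewrite gt_eqF.
by apply: divr_gt0 => //; apply: addr_gt0.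
Qed.

Lemma mut_seq_cat a b s : mut_seq (a ++ b) s = mut_seq b (mut_seq a s).
Proof. by rewrite /mut_seq foldl_cat. Qed.

Definition Bn0 := mxl [:: [:: 0; -2; 1]; [:: 2; 0; -1]; [:: -1; 1; 0]].
Definition B1 := mxl [:: [:: 0; 1; -2]; [:: -1; 0; 1]; [:: 2; -1; 0]].
Definition Bn1 := mxl [:: [:: 0; -1; 2]; [:: 1; 0; -1]; [:: -2; 1; 0]].
Definition P1 := mxl [:: [:: 0; 1; 1]; [:: -1; 0; -1]; [:: -1; 1; 0]].
Definition P2 := mxl [:: [:: 0; -1; -1]; [:: 1; 0; -1]; [:: 1; 1; 0]].

Ltac mxt := apply/matrixP; case=> [[|[|[|?]]] ?]; case=> [[|[|[|?]]] ?]; rewrite !mxE //.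

Lemma mB0 : mut_mat i0 B0 = Bn0. Proof. mxt. Qed.
Lemma mBn0 : mut_mat i1 Bn0 = B0. Proof. mxt. Qed.
Lemma mB1 : mut_mat i0 B1 = Bn1. Proof. mxt. Qed.
Lemma mBn1 : mut_mat i2 Bn1 = B1. Proof. mxt. Qed.
Lemma mP0 : mut_mat i2 B0 = P1. Proof. mxt. Qed.
Lemma mP1 : mut_mat i0 P1 = P2. Proof. mxt. Qed.
Lemma mP2 : mut_mat i1 P2 = B1. Proof. mxt. Qed.

Lemma gmut k s : gs_g (mut_seed k s) = fun j => if j == k then
       - gs_g s k + \sum_(i < 3 | 0 < gs_B s i k) gs_B s i k * gs_g s i
     else gs_g s j.
Proof. by []. Qed.

Ltac gt hB hg := rewrite gmut hB; case=> [[|[|[|?]]] ?] //;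
   rewrite /= ?sum3 ?mxE /= ?hg //.

Lemma gB0 s : gs_B s = B0 -> gs_g s =1 trz 1 1 2 -> gs_g (mut_seed i0 s) =1 trz 1 1 2.
Proof. move=> hB hg. gt hB hg. Qed.

Ltac rt := case=> [[|[|[|?]]] ?] //; rewrite /rmut /= !prod3 !mxE /tr /= ?add0n.

Lemma rK1 a b c : rmut i0 B0 (tr a b c) =1 tr ((c + b^+2)/a) b c.
Proof. rt. ring. Qed.
Lemma rK2 a b c : rmut i1 Bn0 (tr a b c) =1 tr a ((c + a^+2)/b) c.
Proof. rt. ring. Qed.
Lemma rL1 a c b : rmut i0 B1 (tr a c b) =1 tr ((c + b^+2)/a) c b.
Proof. rt. ring. Qed.
Lemma rL2 a c b : rmut i2 Bn1 (tr a c b) =1 tr a c ((c + a^+2)/b).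
Proof. rt. ring. Qed.
Lemma rP0 : rmut i2 B0 (tr 1 1 1) =1 tr 1 1 2.
Proof. rt. rewrite divr1; ring. Qed.
Lemma rP1 : rmut i0 P1 (tr 1 1 2) =1 tr 3 1 2.
Proof. rt. rewrite divr1; ring. Qed.
Lemma rP2 : rmut i1 P2 (tr 3 1 2) =1 tr 3 5 2.
Proof. rt. rewrite divr1; ring. Qed.

Lemma gK2 s : gs_B s = Bn0 -> gs_g s =1 trz 1 1 2 -> gs_g (mut_seed i1 s) =1 trz 1 1 2.
Proof. move=> hB hg. gt hB hg. Qed.
Lemma gL1 s : gs_B s = B1 -> gs_g s =1 trz (-1) (-2) (-1) -> gs_g (mut_seed i0 s) =1 trz (-1) (-2) (-1).
Proof. move=> hB hg. gt hB hg. Qed.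
Lemma gL2 s : gs_B s = Bn1 -> gs_g s =1 trz (-1) (-2) (-1) -> gs_g (mut_seed i2 s) =1 trz (-1) (-2) (-1).
Proof. move=> hB hg. gt hB hg. Qed.
Lemma gP0 s : gs_B s = B0 -> gs_g s =1 trz 1 1 2 -> gs_g (mut_seed i2 s) =1 trz 1 1 (-1).
Proof. move=> hB hg. gt hB hg. Qed.
Lemma gP1 s : gs_B s = P1 -> gs_g s =1 trz 1 1 (-1) -> gs_g (mut_seed i0 s) =1 trz (-1) 1 (-1).
Proof. move=> hB hg. gt hB hg. Qed.
Lemma gP2 s : gs_B s = P2 -> gs_g s =1 trz (-1) 1 (-1) -> gs_g (mut_seed i1 s) =1 trz (-1) (-2) (-1).
Proof. move=> hB hg. gt hB hg. Qed.

Definition stp (c : rat) (p : rat * rat) : rat * rat :=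
  let a' := (c + p.2 ^+ 2) / p.1 in (a', (c + a' ^+ 2) / p.2).

Lemma stp_mono c p : 0 < c -> 0 < p.1 <= p.2 ->
  0 < (stp c p).1 <= (stp c p).2 /\ p.2 < (stp c p).1.
Proof.
case: p => a b /= hc /andP [ha hab].
have hb : 0 < b by apply: lt_le_trans hab.
have h1 : b < (c + b ^+ 2) / a by rewrite ltr_pdivlMr //; nra.
set a' := (c + b ^+ 2) / a in h1 *.
have ha' : 0 < a' by apply: lt_trans h1.
split => //; apply/andP; split => //.
by rewrite ler_pdivlMr //; nra.
Qed.

Lemma iter_mono c p : 0 < c -> 0 < p.1 <= p.2 ->
  forall n, (iter n (stp c) p).1 < (iter n.+1 (stp c) p).1.
Proof.
move=> hc hp.
have inv : forall n, 0 < (iter n (stp c) p).1 <= (iter n (stp c) p).2.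
  by elim=> // n IH; rewrite iterS; case: (stp_mono hc IH).
move=> n; rewrite iterS; have [_ h] := stp_mono hc (inv n).
by apply: le_lt_trans h; case/andP: (inv n).
Qed.

Lemma iter_inj c p : 0 < c -> 0 < p.1 <= p.2 -> injective (fun n => (iter n (stp c) p).1).
Proof.
move=> hc hp.
have hom := homo_ltn (fun y x z => @lt_trans _ _ y x z) (iter_mono hc hp).
move=> n m /= e; case: (ltngtP n m) => // h; have := hom _ _ h; by rewrite e ltxx.
Qed.

Definition InvK s (p : rat * rat) := gs_B s = B0 /\ gs_g s =1 trz 1 1 2 /\ relx s (tr p.1 p.2 1).
Definition InvL s (p : rat * rat) := gs_B s = B1 /\ gs_g s =1 trz (-1) (-2) (-1) /\ relx s (tr p.1 5 p.2).

Lemma stepK s p : InvK s p -> InvK (mut_seq [:: i0; i1] s) (stp 1 p).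
Proof.
case: p => a b [hB [hg hr]]; rewrite /InvK; change (mut_seq [:: i0; i1] s) with (mut_seed i1 (mut_seed i0 s)).
have hB' : gs_B (mut_seed i0 s) = Bn0 by rewrite /= hB mB0.
split; first by change (mut_mat i1 (gs_B (mut_seed i0 s)) = B0); rewrite hB' mBn0.
split; first exact: gK2 hB' (gB0 hB hg).
have h1 : relx (mut_seed i0 s) (tr ((1 + b^+2)/a) b 1).
  by apply: relx_ext (relx_mut i0 hr) _; rewrite hB; exact: rK1.
by apply: relx_ext (relx_mut i1 h1) _; rewrite hB'; exact: rK2.
Qed.

Lemma stepL s p : InvL s p -> InvL (mut_seq [:: i0; i2] s) (stp 5 p).
Proof.
case: p => a b [hB [hg hr]]; rewrite /InvL; change (mut_seq [:: i0; i2] s) with (mut_seed i2 (mut_seed i0 s)).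
have hB' : gs_B (mut_seed i0 s) = Bn1 by rewrite /= hB mB1.
split; first by change (mut_mat i2 (gs_B (mut_seed i0 s)) = B1); rewrite hB' mBn1.
split; first exact: gL2 hB' (gL1 hB hg).
have h1 : relx (mut_seed i0 s) (tr ((5 + b^+2)/a) 5 b).
  by apply: relx_ext (relx_mut i0 hr) _; rewrite hB; exact: rL1.
by apply: relx_ext (relx_mut i2 h1) _; rewrite hB'; exact: rL2.
Qed.

Lemma iterK n s p : InvK s p ->
  InvK (mut_seq (flatten (nseq n [:: i0; i1])) s) (iter n (stp 1) p).
Proof.
elim: n s p => // n IH s p h.
change (flatten (nseq n.+1 [:: i0; i1])) with ([:: i0; i1] ++ flatten (nseq n [:: i0; i1])).
by rewrite mut_seq_cat iterSr; apply: IH; exact: stepK.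
Qed.

Lemma iterL n s p : InvL s p ->
  InvL (mut_seq (flatten (nseq n [:: i0; i2])) s) (iter n (stp 5) p).
Proof.
elim: n s p => // n IH s p h.
change (flatten (nseq n.+1 [:: i0; i2])) with ([:: i0; i2] ++ flatten (nseq n [:: i0; i2])).
by rewrite mut_seq_cat iterSr; apply: IH; exact: stepL.
Qed.

Lemma InvK0 : InvK seed0 (1, 1).
Proof.
split => //; split; first by case=> [[|[|[|?]]] ?].
by case=> [[|[|[|?]]] ?] //=; (split; [exact: repX | exact: ltr01]).
Qed.

Lemma InvL0 : InvL (mut_seq [:: i2; i0; i1; i0; i2] seed0) (3, 7).
Proof.
have e : stp 5 (3, 2) = (3, 7).
  rewrite /stp /=; congr pair; field.
rewrite -e (mut_seq_cat [:: i2; i0; i1] [:: i0; i2]); apply: stepL.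
have [hB0 [hg0 hr0]] := InvK0.
have hb1 : gs_B (mut_seed i2 seed0) = P1 by rewrite /= mP0.
have hb2 : gs_B (mut_seed i0 (mut_seed i2 seed0)) = P2.
  by change (mut_mat i0 (gs_B (mut_seed i2 seed0)) = P2); rewrite hb1 mP1.
change (mut_seq [:: i2; i0; i1] seed0) with (mut_seed i1 (mut_seed i0 (mut_seed i2 seed0))).
split; first by change (mut_mat i1 (gs_B (mut_seed i0 (mut_seed i2 seed0))) = B1); rewrite hb2 mP2.
split; first exact: gP2 hb2 (gP1 hb1 (gP0 hB0 hg0)).
have h1 : relx (mut_seed i2 seed0) (tr 1 1 2).
  by apply: relx_ext (relx_mut i2 hr0) _; exact: rP0.
have h2 : relx (mut_seed i0 (mut_seed i2 seed0)) (tr 3 1 2).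
  by apply: relx_ext (relx_mut i0 h1) _; rewrite hb1; exact: rP1.
by apply: relx_ext (relx_mut i1 h2) _; rewrite hb2; exact: rP2.
Qed.

Theorem mainTheorem5 :
  (exists f : nat -> Kfield,
      injective f /\ forall n, cluster_var_of_degree seed0 (f n) 1) /\
  (exists f : nat -> Kfield,
      injective f /\ forall n, cluster_var_of_degree seed0 (f n) (-1)).
Proof.
split.
  exists (fun n => gs_x (mut_seq (flatten (nseq n [:: i0; i1])) seed0) i0); split.
    move=> n m e.
    have [_ [_ hn]] := iterK n InvK0; have [_ [_ hm]] := iterK m InvK0.
    have [rn _] := hn i0; have [rm _] := hm i0.
    rewrite e in rn; have := rep_uniq rn rm.
    by apply: (iter_inj (c := 1) (p := (1, 1))).
  move=> n; exists (flatten (nseq n [:: i0; i1])), i0; split => //.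
  by have [_ [hg _]] := iterK n InvK0; rewrite hg.
exists (fun n => gs_x (mut_seq (flatten (nseq n [:: i0; i2]))
                    (mut_seq [:: i2; i0; i1; i0; i2] seed0)) i0); split.
  move=> n m e.
  have [_ [_ hn]] := iterL n InvL0; have [_ [_ hm]] := iterL m InvL0.
  have [rn _] := hn i0; have [rm _] := hm i0.
  rewrite e in rn; have := rep_uniq rn rm.
  by apply: (iter_inj (c := 5) (p := (3, 7))).
move=> n; exists ([:: i2; i0; i1; i0; i2] ++ flatten (nseq n [:: i0; i2])), i0.
rewrite mut_seq_cat; split => //.
by have [_ [hg _]] := iterL n InvL0; rewrite hg.
Qed.
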